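(* Let $n\in\mathbb{N}$ and $\lambda=0$. The solution of the system $(B)$ starting at $\phi(1,0)$ (i.e. the trajectory in the variables $(\mathcal{L},X_1,X_2,Y_1,Y_2)$ obtained from the solution corresponding to $(\alpha,\beta)=(1,0)$) exists for all large $s$, the functions $\mathcal{L},X_1,X_2,Y_1,Y_2$ all have real limits as $s\to\infty$, and $\lim_{s\to\infty}\mathcal{L}(s)>0$, $\lim_{s\to\infty}X_1(s)=\lim_{s\to\infty}X_2(s)=\lim_{s\to\infty}Y_1(s)=0$, $\lim_{s\to\infty}Y_2(s)>0$.
   Context: Fix $n\in\mathbb{N}$, $\lambda=0$. The $U(2)$-invariant soliton system for $(\xi,L_1,L_2,R_1,R_2)$ as functions of $r$ is: $\xi'=-L_1^2-2L_2^2-\lambda$, $L_1'=-\xi L_1+\frac{R_1^2}{2}-\lambda$, $L_2'=-\xi L_2+R_1R_2-\frac{R_1^2}{2}-\lambda$, $R_1'=R_1(L_1-2L_2)$, $R_2'=-R_2L_1$. Standing fact (standard short-time existence): there are $T>0$ and a continuous $\phi:\mathbb{S}^1\to(1,\infty)\times\mathbb{R}^6$ such that for each $(\alpha,\beta)\in\mathbb{S}^1$ there is a solution of this system on $(0,T]$ (regarded as a solution of the full system with $L_3=L_2$, $R_3=R_2$) with data $\phi(\alpha,\beta)=(\xi,L_1,L_2,L_2,R_1,R_2,R_2)(T)$, satisfying $\alpha=\lim_{r\to0}\frac{\xi-L_1-2L_2}{r}$, $\beta=\lim_{r\to0}\frac{R_1}{r}$; if $\alpha=0$ then $\xi=L_1+2L_2$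 and $L_1^2+2L_2^2+2R_1R_2-\frac{R_1^2}{2}-(L_1+2L_2)^2=2\lambda$; if $\beta=0$ then $R_1\equiv0$; if $\beta>0$ then $f_1=1/R_2$, $f_2=f_3=(R_1R_2)^{-1/2}$, $u'=L_1+2L_2-\xi$ give a steady gradient Ricci soliton metric $dr^2+f_1^2\omega_1^2+f_2^2(\omega_2^2+\omega_3^2)$ ($\omega_i$ dual to $u_i/2$) extending smoothly over the singular orbit $\mathbb{S}^2$ of $M=SU(2)\times_{U(1)}\mathbb{R}^2$. This is called the solution corresponding to $(\alpha,\beta)$. Change of variables: where $\xi>0$ set $\mathcal{L}=1/\xi$, $X_i=\mathcal{L}L_i$, $Y_i=\mathcal{L}R_i$, and reparametrise by $s$ with $dr/ds=\mathcal{L}(r(s))$, $r(0)=T$. Then the system $(B)$ holds: $\frac{d\mathcal{L}}{ds}=\mathcal{L}(X_1^2+2X_2^2+\lambda\mathcal{L}^2)$, $\frac{dX_1}{ds}=\frac{Y_1^2}{2}-X_1-\lambda\mathcal{L}^2+X_1(X_1^2+2X_2^2+\lambda\mathcal{L}^2)$, $\frac{dX_2}{ds}=Y_1Y_2-\frac{Y_1^2}{2}-X_2-\lambda\mathcal{L}^2+X_2(X_1^2+2X_2^2+\lambda\mathcal{L}^2)$, $\frac{dY_1}{ds}=Y_1(X_1-2X_2+X_1^2+2X_2^2+\lambda\mathcal{L}^2)$, $\frac{dY_2}{ds}=Y_2(-X_1+X_1^2+2X_2^2+\lambda\mathcal{L}^2)$. ''The solution of $(B)$ starting at $\phi(\alpha,\beta)$''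 is the maximal solution of $(B)$ with the initial data at $s=0$ obtained from $\phi(\alpha,\beta)$ by this change of variables. *)

(* Defs.v *)
From Stdlib Require Import Reals.
From Coquelicot Require Import Coquelicot.
Open Scope R_scope.

(* The U(2)-invariant soliton system in r (with L3 = L2, R3 = R2), at a point r. *)
Definition rsys_at (lam : R) (xi L1 L2 R1 R2 : R -> R) (r : R) : Prop :=
  is_derive xi r (- (L1 r)^2 - 2 * (L2 r)^2 - lam) /\
  is_derive L1 r (- xi r * L1 r + (R1 r)^2 / 2 - lam) /\
  is_derive L2 r (- xi r * L2 r + R1 r * R2 r - (R1 r)^2 / 2 - lam) /\
  is_derive R1 r (R1 r * (L1 r - 2 * L2 r)) /\
  is_derive R2 r (- R2 r * L1 r).

Definition Bq (lam : R) (Lc X1 X2 : R -> R) (s : R) : R :=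
  (X1 s)^2 + 2 * (X2 s)^2 + lam * (Lc s)^2.

Definition Bsys_at (lam : R) (Lc X1 X2 Y1 Y2 : R -> R) (s : R) : Prop :=
  let q := Bq lam Lc X1 X2 s in
  is_derive Lc s (Lc s * q) /\
  is_derive X1 s ((Y1 s)^2 / 2 - X1 s - lam * (Lc s)^2 + X1 s * q) /\
  is_derive X2 s (Y1 s * Y2 s - (Y1 s)^2 / 2 - X2 s - lam * (Lc s)^2 + X2 s * q) /\
  is_derive Y1 s (Y1 s * (X1 s - 2 * X2 s + q)) /\
  is_derive Y2 s (Y2 s * (- X1 s + q)).

Definition Bsol_on (lam : R) (S : Rbar) (Lc X1 X2 Y1 Y2 : R -> R) : Prop :=
  Rbar_lt 0 S /\
  (forall s, 0 < s -> Rbar_lt s S -> Bsys_at lam Lc X1 X2 Y1 Y2 s) /\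
  filterlim Lc (at_right 0) (locally (Lc 0)) /\
  filterlim X1 (at_right 0) (locally (X1 0)) /\
  filterlim X2 (at_right 0) (locally (X2 0)) /\
  filterlim Y1 (at_right 0) (locally (Y1 0)) /\
  filterlim Y2 (at_right 0) (locally (Y2 0)).

(* Initial data at s = 0 obtained from the data (xi,L1,L2,R1,R2)(T) by the
   change of variables L = 1/xi, X_i = L L_i, Y_i = L R_i. *)
Definition B_init (xiT L1T L2T R1T R2T : R) (Lc X1 X2 Y1 Y2 : R -> R) : Prop :=
  Lc 0 = / xiT /\ X1 0 = L1T / xiT /\ X2 0 = L2T / xiT /\
  Y1 0 = R1T / xiT /\ Y2 0 = R2T / xiT.

(* Main.v *)
Require Import Defs.
From Stdlib Require Import Reals Lra Psatz.
From Coquelicot Require Import Coquelicot.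
Open Scope R_scope.


Lemma der_mult (f g : R -> R) (x df dg : R) : is_derive f x df -> is_derive g x dg ->
  is_derive (fun t => f t * g t) x (df * g x + f x * dg).
Proof. intros. apply (is_derive_mult (K:=R_AbsRing)); auto. intros; apply Rmult_comm. Qed.

Lemma der_minus (f g : R -> R) (x df dg : R) : is_derive f x df -> is_derive g x dg ->
  is_derive (fun t => f t - g t) x (df - dg).
Proof. intros. apply (is_derive_minus (V:=R_NormedModule)); auto. Qed.

Lemma der_val (f : R -> R) (x l l' : R) : is_derive f x l -> l = l' -> is_derive f x l'.
Proof. intros H ->; exact H. Qed.

Lemma lim_mult {T} {F : (T -> Prop) -> Prop} {FF : Filter F} (f g : T -> R) a b :
  filterlim f F (locally a) -> filterlim g F (locally b) ->
  filterlim (fun x => f x * g x) F (locally (a*b)).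
Proof. intros. apply (filterlim_comp_2 f g Rmult H H0 (filterlim_mult (K:=R_AbsRing) a b)). Qed.

Lemma lim_plus {T} {F : (T -> Prop) -> Prop} {FF : Filter F} (f g : T -> R) a b :
  filterlim f F (locally a) -> filterlim g F (locally b) ->
  filterlim (fun x => f x + g x) F (locally (a+b)).
Proof. intros. apply (filterlim_comp_2 f g Rplus H H0 (filterlim_plus (V:=R_NormedModule) a b)). Qed.

Lemma lim_opp {T} {F : (T -> Prop) -> Prop} {FF : Filter F} (f : T -> R) a :
  filterlim f F (locally a) -> filterlim (fun x => - f x) F (locally (-a)).
Proof. intros. apply (filterlim_comp _ _ _ f Ropp F _ _ H (filterlim_opp (V:=R_NormedModule) a)). Qed.

Lemma lim_minus {T} {F : (T -> Prop) -> Prop} {FF : Filter F} (f g : T -> R) a b :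
  filterlim f F (locally a) -> filterlim g F (locally b) ->
  filterlim (fun x => f x - g x) F (locally (a-b)).
Proof. intros. apply lim_plus; auto. apply lim_opp; auto. Qed.

Lemma lim_ext_eq {T} {F : (T -> Prop) -> Prop} {FF : Filter F} (f g : T -> R) a :
  F (fun x => f x = g x) -> filterlim f F (locally a) -> filterlim g F (locally a).
Proof. intros. apply (filterlim_ext_loc f g); auto. Qed.

Lemma uniq_right (f : R -> R) x a b : filterlim f (at_right x) (locally a) ->
  filterlim f (at_right x) (locally b) -> a = b.
Proof. intros. apply (filterlim_locally_unique (F:=at_right x) f); auto. Qed.

Lemma uniq_left (f : R -> R) x a b : filterlim f (at_left x) (locally a) ->
  filterlim f (at_left x) (locally b) -> a = b.
Proof. intros. apply (filterlim_locally_unique (F:=at_left x) f); auto. Qed.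

Lemma cont_right (f : R -> R) (x : R) : continuous f x -> filterlim f (at_right x) (locally (f x)).
Proof. intros H P HP. destruct (H P HP) as [d Hd]. exists d. intros; apply Hd; auto. Qed.

Lemma id_right (x : R) : filterlim (fun t => t) (at_right x) (locally x).
Proof. intros P [d Hd]. exists d. intros; apply Hd; auto. Qed.

Lemma ball_R (x e y : R) : ball x e y <-> Rabs (y - x) < e.
Proof. reflexivity. Qed.

Lemma mono_dec (f df : R -> R) (a b : R) : (forall x, a<x<b -> is_derive f x (df x)) ->
  (forall x, a<x<b -> df x <= 0) -> forall x y, a<x -> x<=y -> y<b -> f y <= f x.
Proof.
  intros H H0 x y Hx Hxy Hy. destruct (Req_dec x y) as [->|Hne]; [lra|].
  destruct (MVT_gen f x y df) as [c [Hc Heq]]; cbv zeta in *.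
  - intros z Hz. rewrite Rmin_left, Rmax_right in Hz by lra. apply H; lra.
  - intros z Hz. rewrite Rmin_left, Rmax_right in Hz by lra.
    apply continuity_pt_filterlim. apply (ex_derive_continuous f z). exists (df z); apply H; lra.
  - rewrite Rmin_left, Rmax_right in Hc by lra. assert (df c <= 0) by (apply H0; lra). nra.
Qed.

Lemma lim_mult' {T} {F : (T -> Prop) -> Prop} {FF : Filter F} (f g : T -> R) a b c :
  filterlim f F (locally a) -> filterlim g F (locally b) -> c = a * b ->
  filterlim (fun x => f x * g x) F (locally c).
Proof. intros H1 H2 ->. apply lim_mult; auto. Qed.

Lemma lim_plus' {T} {F : (T -> Prop) -> Prop} {FF : Filter F} (f g : T -> R) a b c :
  filterlim f F (locally a) -> filterlim g F (locally b) -> c = a + b ->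
  filterlim (fun x => f x + g x) F (locally c).
Proof. intros H1 H2 ->. apply lim_plus; auto. Qed.

Lemma lim_minus' {T} {F : (T -> Prop) -> Prop} {FF : Filter F} (f g : T -> R) a b c :
  filterlim f F (locally a) -> filterlim g F (locally b) -> c = a - b ->
  filterlim (fun x => f x - g x) F (locally c).
Proof. intros H1 H2 ->. apply lim_minus; auto. Qed.

Lemma gron (h dh : R -> R) (s1 M : R) :
  (forall x, 0<x<s1 -> is_derive h x (dh x)) -> (forall x, 0<x<s1 -> 0 <= h x) ->
  (forall x, 0<x<s1 -> dh x <= M * h x) -> filterlim h (at_right 0) (locally 0) ->
  forall x, 0<x<s1 -> h x = 0.
Proof.
  intros Hd Hp Hb Hl x Hx.
  set (k := fun t => h t * exp (-(M*t))).
  set (dk := fun t => dh t * exp (-(M*t)) + h t * (exp (-(M*t)) * (-M))).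
  assert (Hk : forall t, 0<t<s1 -> is_derive k t (dk t)).
  { intros t Ht. unfold k, dk. eapply der_val.
    apply (der_mult h (fun t => exp (-(M*t)))). apply Hd; auto.
    auto_derive; auto. simpl. ring. }
  assert (Hkn : forall t, 0<t<s1 -> dk t <= 0).
  { intros t Ht. unfold dk. specialize (Hb t Ht). pose proof (exp_pos (-(M*t))). nra. }
  assert (Hmono := mono_dec k dk 0 s1 Hk Hkn).
  destruct (Rle_lt_or_eq_dec 0 (h x) (Hp x Hx)) as [Hpos|]; [|auto].
  exfalso.
  set (E := exp (Rabs M * s1)).
  assert (HE : 0 < E) by apply exp_pos.
  assert (Hkx : 0 < k x) by (unfold k; pose proof (exp_pos (-(M*x))); nra).
  assert (He : 0 < k x / E) by (apply Rdiv_lt_0_compat; auto).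
  destruct (proj1 (filterlim_locally h 0) Hl (mkposreal _ He)) as [d Hdd].
  simpl in Hdd.
  set (e := Rmin (d/2) x).
  assert (He0 : 0 < e) by (unfold e; apply Rmin_glb_lt; pose proof (cond_pos d); lra).
  assert (He1 : e <= x) by apply Rmin_r.
  assert (He2 : e < d) by (unfold e; pose proof (Rmin_l (d/2) x); pose proof (cond_pos d); lra).
  assert (Hhe' : Rabs (h e - 0) < k x / E) by (apply (Hdd e); [change (Rabs (e - 0) < d); rewrite Rminus_0_r, Rabs_pos_eq; lra | lra]).
  rewrite Rminus_0_r, Rabs_pos_eq in Hhe' by (apply Hp; lra).
  assert (Hkk : k x <= k e) by (apply Hmono; lra).
  assert (Hexp : exp (-(M*e)) <= E).
  { unfold E. destruct (Req_dec (-(M*e)) (Rabs M * s1)) as [->|]; [lra|].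
    left. apply exp_increasing.
    assert (-(M*e) <= Rabs M * e) by (destruct (Rcase_abs M) as [Hm|Hm]; [rewrite Rabs_left by auto; nra| rewrite Rabs_right by auto; nra]).
    pose proof (Rabs_pos M). nra. }
  unfold k at 2 in Hkk. pose proof (Hp e ltac:(lra)).
  assert (h e * exp (-(M*e)) <= h e * E) by (apply Rmult_le_compat_l; auto).
  assert (Hq : h e * E < k x / E * E) by (apply Rmult_lt_compat_r; auto).
  replace (k x / E * E) with (k x) in Hq by (field; lra).
  lra.
Qed.

Lemma lin_uniq (f g : R -> R) (s1 M : R) :
  (forall x, 0<x<s1 -> is_derive f x (g x * f x)) -> (forall x, 0<x<s1 -> Rabs (g x) <= M) ->
  filterlim f (at_right 0) (locally 0) -> forall x, 0<x<s1 -> f x = 0.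
Proof.
  intros Hd Hb Hl x Hx.
  assert (H : f x * f x = 0).
  { apply (gron (fun t => f t * f t) (fun t => g t * f t * f t + f t * (g t * f t)) s1 (2*M)); [ | | | | exact Hx].
    - intros t Ht. apply der_mult; apply Hd; auto.
    - intros t Ht. nra.
    - intros t Ht. specialize (Hb t Ht). pose proof (Rle_abs (g t)). nra.
    - apply lim_mult' with 0 0; auto; ring. }
  apply Rmult_integral in H; tauto.
Qed.

Lemma bnd (f : R -> R) (s1 : R) : 0 < s1 -> (forall x, 0 < x <= s1 -> continuous f x) ->
  filterlim f (at_right 0) (locally (f 0)) -> exists M, forall x, 0 < x < s1 -> Rabs (f x) <= M.
Proof.
  intros Hs Hc Hl.
  destruct (proj1 (filterlim_locally f (f 0)) Hl (mkposreal 1 Rlt_0_1)) as [d Hd]. simpl in Hd.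
  set (e := Rmin (d/2) s1).
  assert (He0 : 0 < e) by (unfold e; apply Rmin_glb_lt; pose proof (cond_pos d); lra).
  assert (He1 : e <= s1) by apply Rmin_r.
  assert (He2 : e < d) by (unfold e; pose proof (Rmin_l (d/2) s1); pose proof (cond_pos d); lra).
  destruct (bounded_continuity f e s1) as [M2 HM2].
  { intros x Hx. apply Hc; lra. }
  exists (Rmax (Rabs (f 0) + 1) M2). intros x Hx.
  destruct (Rlt_or_le x e).
  - assert (Rabs (f x - f 0) < 1) by (apply (Hd x); [change (Rabs (x - 0) < d); rewrite Rminus_0_r, Rabs_pos_eq; lra | lra]).
    eapply Rle_trans; [|apply Rmax_l].
    pose proof (Rabs_triang_inv (f x) (f 0)). lra.
  - eapply Rle_trans; [|apply Rmax_r]. left. apply (HM2 x). lra.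
Qed.

Lemma lim_right_le (f : R -> R) (x b c : R) : x < b -> (forall y, x < y < b -> c <= f y) ->
  filterlim f (at_right x) (locally 0) -> c <= 0.
Proof.
  intros Hxb H Hl. destruct (Rle_or_lt c 0) as [|Hc]; auto. exfalso.
  destruct (proj1 (filterlim_locally f 0) Hl (mkposreal c Hc)) as [d Hd]. simpl in Hd.
  set (y := x + Rmin (d/2) ((b - x)/2)).
  assert (0 < Rmin (d/2) ((b-x)/2)) by (apply Rmin_glb_lt; pose proof (cond_pos d); lra).
  assert (Rmin (d/2) ((b-x)/2) <= d/2) by apply Rmin_l.
  assert (Rmin (d/2) ((b-x)/2) <= (b-x)/2) by apply Rmin_r.
  pose proof (cond_pos d).
  assert (Rabs (f y - 0) < c) by (apply (Hd y); [change (Rabs (y - x) < d); unfold y; rewrite Rabs_pos_eq; lra | unfold y; lra]).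
  assert (c <= f y) by (apply H; unfold y; lra).
  pose proof (Rle_abs (f y - 0)). lra.
Qed.

Lemma lim_left_ge (f : R -> R) (a x c : R) : a < x -> (forall y, a < y < x -> f y <= c) ->
  filterlim f (at_left x) (locally (f x)) -> f x <= c.
Proof.
  intros Hax H Hl. destruct (Rle_or_lt (f x) c) as [|Hc]; auto. exfalso.
  assert (Hp : 0 < f x - c) by lra.
  destruct (proj1 (filterlim_locally f (f x)) Hl (mkposreal _ Hp)) as [d Hd]. simpl in Hd.
  set (y := x - Rmin (d/2) ((x - a)/2)).
  assert (0 < Rmin (d/2) ((x-a)/2)) by (apply Rmin_glb_lt; pose proof (cond_pos d); lra).
  assert (Rmin (d/2) ((x-a)/2) <= d/2) by apply Rmin_l.
  assert (Rmin (d/2) ((x-a)/2) <= (x-a)/2) by apply Rmin_r.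
  pose proof (cond_pos d).
  assert (Rabs (f y - f x) < f x - c) by (apply (Hd y); [change (Rabs (y - x) < d); unfold y; rewrite Rabs_minus_sym, Rabs_pos_eq; lra | unfold y; lra]).
  assert (f y <= c) by (apply H; unfold y; lra).
  pose proof (Rle_abs (f x - f y)). pose proof (Rabs_minus_sym (f y) (f x)). lra.
Qed.

Lemma ev_right (T : R) (P : R -> Prop) : 0 < T -> (forall y, 0 < y < T -> P y) -> at_right 0 P.
Proof. intros HT H. exists (mkposreal T HT). intros y Hy Hy0. apply H. change (Rabs (y - 0) < T) in Hy.
  rewrite Rminus_0_r, Rabs_pos_eq in Hy; lra. Qed.

Lemma ev_left (T : R) (P : R -> Prop) : 0 < T -> (forall y, 0 < y < T -> P y) -> at_left T P.
Proof. intros HT H. exists (mkposreal T HT). intros y Hy Hy0. apply H. change (Rabs (y - T) < T) in Hy.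
  rewrite Rabs_minus_sym, Rabs_pos_eq in Hy; lra. Qed.

Lemma rpart (T : R) (xi L1 L2 R1 R2 : R -> R) : 0 < T ->
  (forall r, 0 < r < T -> rsys_at 0 xi L1 L2 R1 R2 r) ->
  filterlim xi (at_left T) (locally (xi T)) ->
  filterlim L1 (at_left T) (locally (L1 T)) ->
  filterlim L2 (at_left T) (locally (L2 T)) ->
  1 < xi T ->
  filterlim (fun r => (xi r - L1 r - 2 * L2 r) / r) (at_right 0) (locally 1) ->
  (forall r, 0 < r <= T -> R1 r = 0) ->
  filterlim (fun r => r * L1 r) (at_right 0) (locally 1) ->
  filterlim L2 (at_right 0) (locally 0) ->
  L2 T = 0 /\ xi T ^ 2 - L1 T ^ 2 = 2.
Proof.
  intros HT Hs Hxl HL1l HL2l HxT Hal HR1 Hv HL20.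
  assert (Hxm : forall x y, 0 < x -> x <= y -> y < T -> xi y <= xi x).
  { apply (mono_dec xi (fun r => -(L1 r)^2 - 2*(L2 r)^2 - 0)).
    - intros r Hr. apply (Hs r Hr).
    - intros r Hr. nra. }
  assert (Hxp : forall r, 0 < r < T -> 1 < xi r).
  { intros r Hr. assert (xi T <= xi r). { apply (lim_left_ge xi r T); try lra; auto.
      intros y Hy. apply Hxm; lra. } lra. }
  assert (HL2m : forall x y, 0 < x -> x <= y -> y < T -> L2 y * L2 y <= L2 x * L2 x).
  { apply (mono_dec (fun r => L2 r * L2 r)
      (fun r => (- xi r * L2 r + R1 r * R2 r - (R1 r)^2 / 2 - 0) * L2 r + L2 r * (- xi r * L2 r + R1 r * R2 r - (R1 r)^2 / 2 - 0))).
    - intros r Hr. apply der_mult; apply (Hs r Hr).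
    - intros r Hr. rewrite HR1 by lra. pose proof (Hxp r Hr). nra. }
  assert (HL2z : forall r, 0 < r < T -> L2 r = 0).
  { intros r Hr. assert (L2 r * L2 r <= 0).
    { apply (lim_right_le (fun y => L2 y * L2 y) 0 r); try lra.
      - intros y Hy. apply HL2m; lra.
      - apply lim_mult' with 0 0; auto; ring. }
    nra. }
  assert (HL2T : L2 T = 0).
  { apply (uniq_left L2 T); auto. apply lim_ext_eq with (fun _ => 0).
    - apply ev_left; auto. intros y Hy. rewrite HL2z; auto.
    - apply filterlim_const. }
  split; auto.
  set (C := fun r => xi r * xi r - L1 r * L1 r).
  set (dxi := fun r => -(L1 r)^2 - 2*(L2 r)^2 - 0).
  set (dL1 := fun r => - xi r * L1 r + (R1 r)^2 / 2 - 0).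
  assert (HC1 : forall x y, 0 < x -> x <= y -> y < T -> C y <= C x).
  { apply (mono_dec C (fun r => (dxi r * xi r + xi r * dxi r) - (dL1 r * L1 r + L1 r * dL1 r))).
    - intros r Hr. destruct (Hs r Hr) as [H1 [H2 _]]. apply der_minus; apply der_mult; auto.
    - intros r Hr. unfold dxi, dL1. rewrite HR1, HL2z by lra. lra. }
  assert (HC2 : forall x y, 0 < x -> x <= y -> y < T -> L1 y * L1 y - xi y * xi y <= L1 x * L1 x - xi x * xi x).
  { apply (mono_dec (fun r => L1 r * L1 r - xi r * xi r) (fun r => (dL1 r * L1 r + L1 r * dL1 r) - (dxi r * xi r + xi r * dxi r))).
    - intros r Hr. destruct (Hs r Hr) as [H1 [H2 _]]. apply der_minus; apply der_mult; auto.
    - intros r Hr. unfold dxi, dL1. rewrite HR1, HL2z by lra. lra. }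
  set (c0 := C (T/2)).
  assert (HCc : forall r, 0 < r < T -> C r = c0).
  { intros r Hr. unfold c0. destruct (Rle_or_lt r (T/2)).
    - pose proof (HC1 r (T/2)). pose proof (HC2 r (T/2)). unfold C in *. lra.
    - pose proof (HC1 (T/2) r). pose proof (HC2 (T/2) r). unfold C in *. lra. }
  assert (Hc0 : c0 = 2).
  { apply (uniq_right C 0).
    - apply lim_ext_eq with (fun _ => c0). apply ev_right with T; auto. intros; rewrite HCc; auto.
      apply filterlim_const.
    - apply lim_ext_eq with (fun r => ((xi r - L1 r - 2 * L2 r) / r) * (r * r * ((xi r - L1 r - 2 * L2 r) / r) + 2 * (r * L1 r))).
      + apply ev_right with T; auto. intros y Hy. unfold C. rewrite HL2z by lra. field. lra.
      + apply lim_mult' with 1 2; auto; [|ring].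
        apply lim_plus' with 0 2; [| | ring].
        * apply lim_mult' with 0 1; auto; [|ring]. apply lim_mult' with 0 0; try apply id_right; ring.
        * apply lim_mult' with 2 1; auto; [apply filterlim_const|ring].
  }
  assert (HCT : C T = c0).
  { apply (uniq_left C T).
    - unfold C. apply lim_minus; apply lim_mult; auto.
    - apply lim_ext_eq with (fun _ => c0). apply ev_left; auto. intros; rewrite HCc; auto.
      apply filterlim_const. }
  unfold C in HCT. rewrite Hc0 in HCT. lra.
Qed.

Definition Dd (a s : R) := 1 - a^2 + a^2 * (exp (-s))^2.
Definition X1e (a s : R) := a * exp (-s) / sqrt (Dd a s).
Definition Lce (a l0 s : R) := l0 / sqrt (Dd a s).
Definition Y2e (a y0 s : R) := y0 * (1 + X1e a s) / (1 + a).

Lemma Dpos a s : a^2 < 1 -> 0 < Dd a s.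
Proof. intros. unfold Dd. pose proof (exp_pos (-s)). nra. Qed.

Lemma der_X1e a s : a^2 < 1 -> is_derive (X1e a) s (X1e a s * (X1e a s ^2 - 1)).
Proof.
  intros Ha. pose proof (Dpos a s Ha) as HD. pose proof (sqrt_lt_R0 _ HD) as Hw.
  unfold X1e. unfold Dd in *. auto_derive.
  - replace (1 - a * (a * 1) + a * (a * 1) * (exp (- s) * (exp (- s) * 1))) with (1 - a ^ 2 + a ^ 2 * exp (- s) ^ 2) by ring.
    split; [lra|split; [lra|exact I]].
  - replace (1 - a * (a * 1) + a * (a * 1) * (exp (- s) * (exp (- s) * 1))) with (1 - a ^ 2 + a ^ 2 * exp (- s) ^ 2) by ring.
    set (w := sqrt (1 - a ^ 2 + a ^ 2 * exp (- s) ^ 2)) in *. field. lra.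
Qed.

Lemma der_Lce a l0 s : a^2 < 1 -> is_derive (Lce a l0) s (Lce a l0 s * X1e a s ^2).
Proof.
  intros Ha. pose proof (Dpos a s Ha) as HD. pose proof (sqrt_lt_R0 _ HD) as Hw.
  unfold Lce, X1e. unfold Dd in *. auto_derive.
  - replace (1 - a * (a * 1) + a * (a * 1) * (exp (- s) * (exp (- s) * 1))) with (1 - a ^ 2 + a ^ 2 * exp (- s) ^ 2) by ring.
    split; [lra|split; [lra|exact I]].
  - replace (1 - a * (a * 1) + a * (a * 1) * (exp (- s) * (exp (- s) * 1))) with (1 - a ^ 2 + a ^ 2 * exp (- s) ^ 2) by ring.
    set (w := sqrt (1 - a ^ 2 + a ^ 2 * exp (- s) ^ 2)) in *. field. lra.
Qed.

Lemma der_Y2e a y0 s : a^2 < 1 -> is_derive (Y2e a y0) s (Y2e a y0 s * (- X1e a s + X1e a s ^2)).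
Proof.
  intros Ha. assert (1 + a <> 0) by nra.
  unfold Y2e. apply (is_derive_ext (fun t => y0/(1+a) * (1 + X1e a t))).
  { intros t. simpl. field; auto. }
  eapply der_val.
  - apply is_derive_scal with (k := y0 / (1 + a)) (f := fun t => 1 + X1e a t).
    eapply der_val. apply (is_derive_plus (V:=R_NormedModule) (fun _ => 1) (X1e a)).
    apply is_derive_const. apply der_X1e; auto. reflexivity.
  - simpl. unfold plus, zero; simpl. field. auto.
Qed.


Lemma exp_neg_lim : filterlim (fun s => exp (-s)) (Rbar_locally p_infty) (locally 0).
Proof.
  apply (filterlim_locally (F:=Rbar_locally p_infty)). intros eps.
  exists (- ln eps). intros x Hx. change (Rabs (exp (-x) - 0) < eps).
  rewrite Rminus_0_r, Rabs_pos_eq by (left; apply exp_pos).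
  rewrite <- (exp_ln eps) by apply cond_pos. apply exp_increasing; lra.
Qed.

Lemma lim_comp_exp (G : R -> R) : ex_derive G 0 ->
  filterlim (fun s => G (exp (-s))) (Rbar_locally p_infty) (locally (G 0)).
Proof.
  intros H. apply (filterlim_comp _ _ _ (fun s => exp (-s)) G _ (locally 0)).
  apply exp_neg_lim. apply (ex_derive_continuous G 0 H).
Qed.

Lemma X1e_lim a : a^2 < 1 -> filterlim (X1e a) (Rbar_locally p_infty) (locally 0).
Proof.
  intros Ha. set (G := fun t => a * t / sqrt (1 - a^2 + a^2 * t^2)).
  replace 0 with (G 0) by (unfold G; field; apply Rgt_not_eq, sqrt_lt_R0; nra).
  apply lim_comp_exp. unfold G. auto_derive. 
  replace (1 - a * (a * 1) + a * (a * 1) * (0 * (0 * 1))) with (1 - a^2) by ring.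
  split; [lra|split; [apply Rgt_not_eq, sqrt_lt_R0; lra|exact I]].
Qed.

Lemma Lce_lim a l0 : a^2 < 1 -> filterlim (Lce a l0) (Rbar_locally p_infty) (locally (l0 / sqrt (1 - a^2))).
Proof.
  intros Ha. set (G := fun t => l0 / sqrt (1 - a^2 + a^2 * t^2)).
  replace (l0 / sqrt (1 - a^2)) with (G 0) by (unfold G; f_equal; f_equal; ring).
  apply lim_comp_exp. unfold G. auto_derive. 
  replace (1 - a * (a * 1) + a * (a * 1) * (0 * (0 * 1))) with (1 - a^2) by ring.
  split; [lra|split; [apply Rgt_not_eq, sqrt_lt_R0; lra|exact I]].
Qed.

Lemma Y2e_lim a y0 : a^2 < 1 -> filterlim (Y2e a y0) (Rbar_locally p_infty) (locally (y0 / (1 + a))).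
Proof.
  intros Ha. unfold Y2e.
  replace (y0 / (1 + a)) with (y0 * (1 + 0) / (1 + a)) by (field; nra).
  unfold Rdiv. apply lim_mult. apply lim_mult. apply filterlim_const.
  apply lim_plus. apply filterlim_const. apply X1e_lim; auto. apply filterlim_const.
Qed.

Lemma Dd0 a : Dd a 0 = 1.
Proof. unfold Dd. rewrite Ropp_0, exp_0. ring. Qed.

Lemma X1e0 a : X1e a 0 = a.
Proof. unfold X1e. rewrite Dd0, sqrt_1, Ropp_0, exp_0. field. Qed.

Lemma Lce0 a l0 : Lce a l0 0 = l0.
Proof. unfold Lce. rewrite Dd0, sqrt_1. field. Qed.

Lemma Y2e0 a y0 : 1 + a <> 0 -> Y2e a y0 0 = y0.
Proof. intros. unfold Y2e. rewrite X1e0. field; auto. Qed.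
Set Bullet Behavior "Strict Subproofs".

Lemma expl_sys a l0 y0 s : a^2 < 1 ->
  Bsys_at 0 (Lce a l0) (X1e a) (fun _ => 0) (fun _ => 0) (Y2e a y0) s.
Proof.
  intros Ha. unfold Bsys_at, Bq. split; [|split; [|split; [|split]]].
  - eapply der_val. apply der_Lce; auto. ring.
  - eapply der_val. apply der_X1e; auto. field.
  - eapply der_val. apply is_derive_const. simpl. unfold zero; simpl. field.
  - eapply der_val. apply is_derive_const. simpl. unfold zero; simpl. field.
  - eapply der_val. apply der_Y2e; auto. field.
Qed.

Lemma Rabs_bnd x M : Rabs x <= M -> -M <= x <= M.
Proof. intros. pose proof (Rle_abs x). pose proof (Rle_abs (-x)). rewrite Rabs_Ropp in *. lra. Qed.

Lemma Rabs_bnd' x M : -M <= x <= M -> Rabs x <= M.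
Proof. intros. apply Rabs_le. lra. Qed.

Lemma cont_of (f : R -> R) x l : is_derive f x l -> continuous f x.
Proof. intros H. apply (ex_derive_continuous f x). exists l; auto. Qed.

Lemma uniq_part (a l0 y0 x0 y00 : R) (S : Rbar) (Lc X1 X2 Y1 Y2 : R -> R) :
  a^2 < 1 ->
  Bsol_on 0 S Lc X1 X2 Y1 Y2 ->
  Lc 0 = l0 -> X1 0 = a -> X2 0 = 0 -> Y1 0 = 0 -> Y2 0 = y0 ->
  forall s, 0 <= s -> Rbar_lt s S ->
    Lc s = Lce a l0 s /\ X1 s = X1e a s /\ X2 s = 0 /\ Y1 s = 0 /\ Y2 s = Y2e a y0 s.
Proof.
  intros Ha [HS [Hsys [cL [cX1 [cX2 [cY1 cY2]]]]]] iL iX1 iX2 iY1 iY2 s Hs0 HsS.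
  assert (H1a : 1 + a <> 0) by nra.
  destruct (Req_dec s 0) as [->|Hs].
  { rewrite Lce0, X1e0, Y2e0; auto. }
  assert (Hs' : 0 < s) by lra.
  assert (Hs1 : exists s1, s < s1 /\ Rbar_lt s1 S).
  { destruct S as [S'| |]; simpl in HsS |- *.
    - exists ((s + S')/2). split; lra.
    - exists (s + 1). split; [lra|exact I].
    - contradiction. }
  destruct Hs1 as [s1 [Hss1 Hs1S]].
  assert (Hin : forall x, 0 < x <= s1 -> Bsys_at 0 Lc X1 X2 Y1 Y2 x).
  { intros x Hx. apply Hsys. lra. destruct S as [S'| |]; simpl in *; auto; lra. }
  assert (Hs1p : 0 < s1) by lra.
  destruct (bnd X1 s1 Hs1p) as [M1 HM1]; auto.
  { intros x Hx. destruct (Hin x Hx) as [_ [H _]]. eapply cont_of; eauto. }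
  destruct (bnd X2 s1 Hs1p) as [M2 HM2]; auto.
  { intros x Hx. destruct (Hin x Hx) as [_ [_ [H _]]]. eapply cont_of; eauto. }
  destruct (bnd (X1e a) s1 Hs1p) as [Me HMe]; auto.
  { intros x Hx. eapply cont_of. apply der_X1e; auto. }
  { apply cont_right. eapply cont_of. apply der_X1e; auto. }
  assert (HY1 : forall x, 0 < x < s1 -> Y1 x = 0).
  { apply (lin_uniq Y1 (fun x => X1 x - 2 * X2 x + (X1 x ^ 2 + 2 * X2 x ^ 2 + 0 * Lc x ^ 2)) s1
      (M1 + 2 * M2 + M1^2 + 2 * M2^2)).
    - intros x Hx. destruct (Hin x ltac:(lra)) as [_ [_ [_ [H _]]]]. eapply der_val; [apply H|].
      unfold Bq. ring.
    - intros x Hx. apply Rabs_bnd'. pose proof (Rabs_bnd _ _ (HM1 x Hx)). pose proof (Rabs_bnd _ _ (HM2 x Hx)).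
      assert (X1 x ^ 2 <= M1 ^ 2) by nra. assert (X2 x ^ 2 <= M2 ^ 2) by nra.
      assert (0 <= X1 x ^ 2) by nra. assert (0 <= X2 x ^ 2) by nra.
      split; nra.
    - rewrite iY1 in cY1. auto. }
  assert (HX2 : forall x, 0 < x < s1 -> X2 x = 0).
  { apply (lin_uniq X2 (fun x => X1 x ^ 2 + 2 * X2 x ^ 2 + 0 * Lc x ^ 2 - 1) s1 (M1^2 + 2 * M2^2 + 1)).
    - intros x Hx. destruct (Hin x ltac:(lra)) as [_ [_ [H _]]]. unfold Bq in H. rewrite HY1 in H by lra.
      eapply der_val; [apply H|]. field.
    - intros x Hx. apply Rabs_bnd'. pose proof (Rabs_bnd _ _ (HM1 x Hx)). pose proof (Rabs_bnd _ _ (HM2 x Hx)).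
      assert (X1 x ^ 2 <= M1 ^ 2) by nra. assert (X2 x ^ 2 <= M2 ^ 2) by nra.
      assert (0 <= X1 x ^ 2) by nra. assert (0 <= X2 x ^ 2) by nra.
      split; nra.
    - rewrite iX2 in cX2. auto. }
  assert (HX1 : forall x, 0 < x < s1 -> X1 x - X1e a x = 0).
  { apply (lin_uniq (fun x => X1 x - X1e a x) (fun x => X1 x ^ 2 + X1 x * X1e a x + X1e a x ^ 2 - 1) s1
      (M1^2 + M1 * Me + Me^2 + 1)).
    - intros x Hx. destruct (Hin x ltac:(lra)) as [_ [H _]]. unfold Bq in H. rewrite HY1, HX2 in H by lra.
      eapply der_val; [apply der_minus; [apply H| apply der_X1e; auto]|]. field.
    - intros x Hx. apply Rabs_bnd'. pose proof (Rabs_bnd _ _ (HM1 x Hx)). pose proof (Rabs_bnd _ _ (HMe x Hx)).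
      assert (Rabs (X1 x * X1e a x) <= M1 * Me) by (rewrite Rabs_mult; apply Rmult_le_compat; auto using Rabs_pos).
      pose proof (Rabs_bnd _ _ H1).
      assert (X1 x ^ 2 <= M1 ^ 2) by nra. assert (X1e a x ^ 2 <= Me ^ 2) by nra.
      assert (0 <= X1 x ^ 2) by nra. assert (0 <= X1e a x ^ 2) by nra.
      split; nra.
    - apply lim_minus' with (X1 0) (X1e a 0); auto.
      + apply cont_right. eapply cont_of. apply der_X1e; auto.
      + rewrite iX1, X1e0. ring. }
  assert (HL : forall x, 0 < x < s1 -> Lc x - Lce a l0 x = 0).
  { apply (lin_uniq (fun x => Lc x - Lce a l0 x) (fun x => X1e a x ^ 2) s1 (Me^2)).
    - intros x Hx. destruct (Hin x ltac:(lra)) as [H _]. unfold Bq in H.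
      assert (X1 x = X1e a x) by (pose proof (HX1 x Hx); lra).
      rewrite HX2, H0 in H by lra.
      eapply der_val; [apply der_minus; [apply H| apply der_Lce; auto]|]. field.
    - intros x Hx. apply Rabs_bnd'. pose proof (Rabs_bnd _ _ (HMe x Hx)).
      assert (X1e a x ^ 2 <= Me ^ 2) by nra. assert (0 <= X1e a x ^ 2) by nra. split; nra.
    - apply lim_minus' with (Lc 0) (Lce a l0 0); auto.
      + apply cont_right. eapply cont_of. apply der_Lce; auto.
      + rewrite iL, Lce0. ring. }
  assert (HY2 : forall x, 0 < x < s1 -> Y2 x - Y2e a y0 x = 0).
  { apply (lin_uniq (fun x => Y2 x - Y2e a y0 x) (fun x => - X1e a x + X1e a x ^ 2) s1 (Me + Me^2)).
    - intros x Hx. destruct (Hin x ltac:(lra)) as [_ [_ [_ [_ H]]]]. unfold Bq in H.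
      assert (X1 x = X1e a x) by (pose proof (HX1 x Hx); lra).
      rewrite HX2, H0 in H by lra.
      eapply der_val; [apply der_minus; [apply H| apply der_Y2e; auto]|]. field.
    - intros x Hx. apply Rabs_bnd'. pose proof (Rabs_bnd _ _ (HMe x Hx)).
      assert (X1e a x ^ 2 <= Me ^ 2) by nra. assert (0 <= X1e a x ^ 2) by nra. split; nra.
    - apply lim_minus' with (Y2 0) (Y2e a y0 0); auto.
      + apply cont_right. eapply cont_of. apply der_Y2e; auto.
      + rewrite iY2, Y2e0; auto. ring. }
  assert (Hx : 0 < s < s1) by lra.
  pose proof (HX1 s Hx). pose proof (HL s Hx). pose proof (HY2 s Hx).
  split; [lra|split; [lra|split; [apply HX2; auto|split; [apply HY1; auto|lra]]]].
Qed.

Theorem proposition4p1 (n : nat) (T : R) (xi L1 L2 R1 R2 : R -> R) :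
  0 < T ->
  (* a solution of the r-system (lambda = 0) on (0, T] *)
  (forall r, 0 < r < T -> rsys_at 0 xi L1 L2 R1 R2 r) ->
  filterlim xi (at_left T) (locally (xi T)) ->
  filterlim L1 (at_left T) (locally (L1 T)) ->
  filterlim L2 (at_left T) (locally (L2 T)) ->
  filterlim R1 (at_left T) (locally (R1 T)) ->
  filterlim R2 (at_left T) (locally (R2 T)) ->
  (* phi takes values in (1, oo) x R^6 *)
  1 < xi T ->
  (* (alpha, beta) = (1, 0) *)
  filterlim (fun r => (xi r - L1 r - 2 * L2 r) / r) (at_right 0) (locally 1) ->
  filterlim (fun r => R1 r / r) (at_right 0) (locally 0) ->
  (* beta = 0 gives R1 = 0 identically *)
  (forall r, 0 < r <= T -> R1 r = 0) ->
  (* regularity at the singular orbit (collapsing circle, f1 = 1/R2 > 0, f1 ~ r) *)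
  filterlim (fun r => r * L1 r) (at_right 0) (locally 1) ->
  filterlim L2 (at_right 0) (locally 0) ->
  0 < R2 T ->
  exists Lc X1 X2 Y1 Y2 : R -> R,
    (* a solution of (B) starting at phi(1,0), defined for all s >= 0 *)
    Bsol_on 0 p_infty Lc X1 X2 Y1 Y2 /\
    B_init (xi T) (L1 T) (L2 T) (R1 T) (R2 T) Lc X1 X2 Y1 Y2 /\
    (* it is the maximal solution: every solution with the same data agrees *)
    (forall (S : Rbar) (Lc' X1' X2' Y1' Y2' : R -> R),
        Bsol_on 0 S Lc' X1' X2' Y1' Y2' ->
        B_init (xi T) (L1 T) (L2 T) (R1 T) (R2 T) Lc' X1' X2' Y1' Y2' ->
        forall s, 0 <= s -> Rbar_lt s S ->
          Lc' s = Lc s /\ X1' s = X1 s /\ X2' s = X2 s /\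
          Y1' s = Y1 s /\ Y2' s = Y2 s) /\
    (* limits as s -> oo *)
    (exists l, filterlim Lc (Rbar_locally p_infty) (locally l) /\ 0 < l) /\
    filterlim X1 (Rbar_locally p_infty) (locally 0) /\
    filterlim X2 (Rbar_locally p_infty) (locally 0) /\
    filterlim Y1 (Rbar_locally p_infty) (locally 0) /\
    (exists l, filterlim Y2 (Rbar_locally p_infty) (locally l) /\ 0 < l).
Proof.
  intros HT Hs Hxl HL1l HL2l HR1l HR2l HxT Hal Hbl HR1 Hv HL20 HR2T.
  destruct (rpart T xi L1 L2 R1 R2 HT Hs Hxl HL1l HL2l HxT Hal HR1 Hv HL20) as [HL2T HC].
  set (a := L1 T / xi T). set (l0 := / xi T). set (y0 := R2 T / xi T).
  assert (Ha : a ^ 2 < 1).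
  { assert (0 < 2 / xi T ^ 2) by (apply Rdiv_lt_0_compat; nra).
    assert (a ^ 2 = 1 - 2 / xi T ^ 2).
    { replace (1 - 2 / xi T ^ 2) with ((xi T ^ 2 - 2) / xi T ^ 2) by (field; lra).
      replace (xi T ^ 2 - 2) with (L1 T ^ 2) by lra. unfold a. field; lra. }
    lra. }
  assert (Ha1 : 0 < 1 + a) by nra.
  assert (Hl0 : 0 < l0) by (unfold l0; apply Rinv_0_lt_compat; lra).
  assert (Hy0 : 0 < y0) by (unfold y0; apply Rdiv_lt_0_compat; lra).
  exists (Lce a l0), (X1e a), (fun _ => 0), (fun _ => 0), (Y2e a y0).
  split; [|split; [|split; [|split; [|split; [|split; [|split]]]]]].
  - split; [exact I|]. split; [intros; apply expl_sys; auto|].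
    split; [apply cont_right; eapply cont_of; apply der_Lce; auto|].
    split; [apply cont_right; eapply cont_of; apply der_X1e; auto|].
    split; [apply filterlim_const|]. split; [apply filterlim_const|].
    apply cont_right; eapply cont_of; apply der_Y2e; auto.
  - unfold B_init. rewrite Lce0, X1e0, Y2e0 by lra. rewrite HL2T, (HR1 T) by lra.
    split; [reflexivity|]. split; [reflexivity|]. split; [field; lra|]. split; [field; lra|]. reflexivity.
  - intros S Lc' X1' X2' Y1' Y2' HB [iL [iX1 [iX2 [iY1 iY2]]]] s Hs0 HsS.
    rewrite HL2T in iX2. rewrite (HR1 T) in iY1 by lra.
    apply (uniq_part a l0 y0 0 0 S Lc' X1' X2' Y1' Y2'); auto.
    + rewrite iX2. field; lra.
    + rewrite iY1. field; lra.
  - exists (l0 / sqrt (1 - a ^ 2)). split; [apply Lce_lim; auto|].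
    apply Rdiv_lt_0_compat; auto. apply sqrt_lt_R0; lra.
  - apply X1e_lim; auto.
  - apply filterlim_const.
  - apply filterlim_const.
  - exists (y0 / (1 + a)). split; [apply Y2e_lim; auto|]. apply Rdiv_lt_0_compat; auto.
Qed.
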